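(* Let $0<\beta\le1$. For every $\delta>0$ there exists an instance of $1\mid t_j\mid\sum C_j$ with obligatory tests on which $\beta$-SORT satisfies $\mathit{ALG}/\mathit{OPT}\ge\frac12\left(\sqrt{\frac{\beta+4}{\beta}}+1\right)-\delta$. In particular, the competitive ratio of $1$-SORT is at least the golden ratio $\frac{1+\sqrt5}{2}\approx1.618$.
   Context: Scheduling with obligatory tests: jobs $J=\{1,\dots,n\}$ on a single machine; job $j$ has a known test time $t_j\ge0$ and a processing time $p_j\ge0$ revealed only when its test has been executed. The test must be executed before the processing part (which may start any time later); operations are non-preemptive, one at a time. $C_j$ is the completion time of the processing part of $j$; objective $\sum_jC_j$. $\mathit{OPT}$ is the optimal offline objective value (all tests must also be executed); $\mathit{ALG}$ is the algorithm's value. Algorithm $\beta$-SORT (parameter $\beta>0$): maintain a priority queue of available operations, initially containing the test of every job $j$ with priority $\beta t_j$; repeatedly remove a minimum-priority operation and execute it immediately; after executing the test of $j$, insert the processing part of $j$ with priority $p_j$. *)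

(* Defs.v *)
From Stdlib Require Import Reals List.
Import ListNotations.
Open Scope R_scope.

(* An instance of 1 | t_j | sum C_j with obligatory tests: n jobs 0..n-1,
   test times t j and processing times p j (both >= 0). *)

Inductive op : Type := Test (j : nat) | Proc (j : nat).

Definition dur (t p : nat -> R) (o : op) : R :=
  match o with Test j => t j | Proc j => p j end.

Definition avail (n : nat) (done : list op) (o : op) : Prop :=
  match o with
  | Test j => (j < n)%nat /\ ~ In (Test j) done
  | Proc j => (j < n)%nat /\ In (Test j) done /\ ~ In (Proc j) done
  end.

(* A feasible (idle-free, non-preemptive) schedule: an order of all 2n
   operations in which every test precedes the corresponding processing. *)
Definition feasible_order (n : nat) (s : list op) : Prop :=
  length s = (2 * n)%nat /\
  forall k, (k < length s)%nat -> avail n (firstn k s) (nth k s (Test 0)).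

Fixpoint cost_aux (t p : nat -> R) (elapsed : R) (s : list op) : R :=
  match s with
  | [] => 0
  | o :: s' =>
      let e := elapsed + dur t p o in
      (match o with Proc _ => e | Test _ => 0 end) + cost_aux t p e s'
  end.

Definition sumC (t p : nat -> R) (s : list op) : R := cost_aux t p 0 s.

Definition is_OPT (n : nat) (t p : nat -> R) (v : R) : Prop :=
  (exists s, feasible_order n s /\ sumC t p s = v) /\
  (forall s, feasible_order n s -> v <= sumC t p s).

Definition prio (beta : R) (t p : nat -> R) (o : op) : R :=
  match o with Test j => beta * t j | Proc j => p j end.

(* s is an execution of beta-SORT (with some tie-breaking): at each step
   the executed operation is available and of minimum priority among all
   available operations. *)
Definition beta_sort_run (beta : R) (n : nat) (t p : nat -> R) (s : list op)
  : Prop :=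
  length s = (2 * n)%nat /\
  forall k, (k < length s)%nat ->
    avail n (firstn k s) (nth k s (Test 0)) /\
    forall o, avail n (firstn k s) o ->
      prio beta t p (nth k s (Test 0)) <= prio beta t p o.

(* Main.v *)
Require Import Defs.
From Stdlib Require Import Reals List Lia Lra Psatz Classical ZArith.
Import ListNotations.
Open Scope R_scope.

Definition idx (o : op) : nat := match o with Test j => j | Proc j => j end.

Lemma op_eq_dec : forall x y : op, {x = y} + {x <> y}.
Proof. decide equality; apply Nat.eq_dec. Qed.

Lemma avail_props n q o : avail n q o -> ~ In o q /\ (idx o < n)%nat.
Proof. destruct o; simpl; tauto. Qed.

Lemma In_firstn_nth (s : list op) d : forall i j, (i < j)%nat -> (i < length s)%nat ->
  In (nth i s d) (firstn j s).
Proof.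
  induction s as [|a s IH]; intros i j Hij Hi; simpl in *; [lia|].
  destruct j; [lia|]. destruct i; simpl; [now left|]. right; apply IH; lia.
Qed.

Lemma nodup_of_prefix (s : list op) d :
  (forall k, (k < length s)%nat -> ~ In (nth k s d) (firstn k s)) -> NoDup s.
Proof.
  intros H. apply (NoDup_nth s d). intros i j Hi Hj Heq.
  destruct (Nat.lt_trichotomy i j) as [Hlt|[?|Hgt]]; auto.
  - exfalso. apply (H j Hj). rewrite <- Heq. apply In_firstn_nth; auto.
  - exfalso. apply (H i Hi). rewrite Heq. apply In_firstn_nth; auto.
Qed.

Lemma feasible_facts n s :
  (forall k, (k < length s)%nat -> avail n (firstn k s) (nth k s (Test 0))) ->
  NoDup s /\ (forall x, In x s -> (idx x < n)%nat).
Proof.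
  intros H. split.
  - apply (nodup_of_prefix s (Test 0)). intros k Hk. apply (avail_props n), H; auto.
  - intros x Hx. destruct (In_nth s x (Test 0) Hx) as [k [Hk Hkx]].
    subst x. apply (avail_props n (firstn k s)), H; auto.
Qed.

Lemma firstn_snoc {A} (s : list A) d : forall i, (i < length s)%nat ->
  firstn (S i) s = firstn i s ++ [nth i s d].
Proof.
  induction s as [|a s IH]; intros i Hi; simpl in *; [lia|].
  destruct i; simpl; [reflexivity|]. f_equal. apply IH; lia.
Qed.

Lemma count_occ_map_filter (f : op -> nat) c : forall l,
  count_occ Nat.eq_dec (map f l) c = length (filter (fun x => Nat.eqb (f x) c) l).
Proof.
  induction l as [|a l IH]; simpl; auto.
  destruct (Nat.eq_dec (f a) c) as [E|E].
  - rewrite E, Nat.eqb_refl; simpl; auto.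
  - apply Nat.eqb_neq in E. rewrite E; auto.
Qed.
Definition tI (m : nat) (b : R) (j : nat) : R := if (j <? m)%nat then 0 else b.
Definition pI (m : nat) (d : R) (j : nat) : R := if (j <? m)%nat then d else 1.
Definition cls (m : nat) (o : op) : nat :=
  match o with Test j => if (j <? m)%nat then 0%nat else 1%nat
             | Proc j => if (j <? m)%nat then 3%nat else 2%nat end.
Definition wc (b d : R) (c : nat) : R :=
  match c with 0%nat => 0 | 1%nat => b | 2%nat => 1 | _ => d end.
Definition Pc (beta b d : R) (c : nat) : R :=
  match c with 0%nat => 0 | 1%nat => beta * b | 2%nat => 1 | _ => d end.
Definition isP (c : nat) : bool :=
  match c with 0%nat | 1%nat => false | _ => true end.
Definition mem (m k c : nat) : list op :=
  match c with 0%nat => map Test (seq 0 m) | 1%nat => map Test (seq m k)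
             | 2%nat => map Proc (seq m k) | _ => map Proc (seq 0 m) end.
Definition sz (m k c : nat) : nat :=
  match c with 0%nat | 3%nat => m | _ => k end.

Lemma cls_le3 m o : (cls m o <= 3)%nat.
Proof. destruct o; simpl; destruct (_ <? _)%nat; lia. Qed.

Lemma mem_length m k c : (c <= 3)%nat -> length (mem m k c) = sz m k c.
Proof.
  intros H. destruct c as [|[|[|[|]]]]; simpl; rewrite length_map, length_seq; auto; lia.
Qed.

Lemma mem_iff m k c x : (c <= 3)%nat ->
  (In x (mem m k c) <-> cls m x = c /\ (idx x < m + k)%nat).
Proof.
  intros Hc. destruct c as [|[|[|[|]]]]; try lia; unfold mem; rewrite in_map_iff;
  destruct x as [j|j]; simpl; destruct (j <? m)%nat eqn:E;
  (apply Nat.ltb_lt in E || apply Nat.ltb_ge in E);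
  (split; [intros [y [Hy Hin]]; try discriminate; injection Hy; intros; subst; apply in_seq in Hin; lia
         | intros [H1 H2]; try discriminate; exists j; split; auto; apply in_seq; lia]).
Qed.

Lemma mem_NoDup m k c : NoDup (mem m k c).
Proof.
  destruct c as [|[|[|[|]]]]; simpl; apply NoDup_map_NoDup_ForallPairs;
  try apply seq_NoDup; intros a b' _ _ H; injection H; auto.
Qed.

Lemma dur_cls m b d o : dur (tI m b) (pI m d) o = wc b d (cls m o).
Proof. destruct o; simpl; unfold tI, pI; destruct (_ <? _)%nat; reflexivity. Qed.

Lemma prio_cls beta m b d o : prio beta (tI m b) (pI m d) o = Pc beta b d (cls m o).
Proof. destruct o; simpl; unfold tI, pI; destruct (_ <? _)%nat; simpl; ring. Qed.

Lemma Pc_strict beta b d c1 c2 : 0 < beta * b < 1 -> 1 < d ->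
  (c1 < c2)%nat -> (c2 <= 3)%nat -> Pc beta b d c1 < Pc beta b d c2.
Proof.
  intros H1 H2 H3 H4. destruct c2 as [|[|[|[|]]]]; try lia;
  destruct c1 as [|[|[|]]]; try lia; simpl; lra.
Qed.

Lemma EXH m k c q : NoDup q -> (forall x, In x q -> (idx x < m + k)%nat) -> (c <= 3)%nat ->
  (count_occ Nat.eq_dec (map (cls m) q) c >= sz m k c)%nat -> incl (mem m k c) q.
Proof.
  intros ND V Hc Hcnt.
  set (l := filter (fun x => Nat.eqb (cls m x) c) q).
  assert (Hl : incl l (mem m k c)).
  { intros x Hx. unfold l in Hx. apply filter_In in Hx as [Hx Hx2].
    apply Nat.eqb_eq in Hx2. apply mem_iff; auto. }
  intros x Hx. apply NoDup_length_incl with (l := l) in Hx.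
  - unfold l in Hx. apply filter_In in Hx; tauto.
  - apply NoDup_filter; auto.
  - rewrite mem_length by auto. unfold l. rewrite <- count_occ_map_filter. lia.
  - exact Hl.
Qed.

Lemma WIT m k c q : (c <= 3)%nat ->
  (count_occ Nat.eq_dec (map (cls m) q) c < sz m k c)%nat ->
  exists x, In x (mem m k c) /\ ~ In x q.
Proof.
  intros Hc Hcnt. apply NNPP. intros Hno.
  assert (Hi : incl (mem m k c) (filter (fun x => Nat.eqb (cls m x) c) q)).
  { intros x Hx. apply filter_In. split.
    - apply NNPP. intros Hn. apply Hno. exists x. auto.
    - apply Nat.eqb_eq. apply (mem_iff m k c x Hc) in Hx. tauto. }
  apply NoDup_incl_length in Hi; [|apply mem_NoDup].
  rewrite mem_length, <- count_occ_map_filter in Hi by auto. lia.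
Qed.
Lemma step_lemma beta b d m k s i B c j :
  0 < beta * b < 1 -> 1 < d ->
  beta_sort_run beta (m + k) (tI m b) (pI m d) s ->
  (i < length s)%nat ->
  map (cls m) (firstn i s) = B ++ repeat c j ->
  (c <= 3)%nat ->
  (forall c', (c' < c)%nat -> (count_occ Nat.eq_dec B c' >= sz m k c')%nat) ->
  count_occ Nat.eq_dec B c = 0%nat ->
  (j < sz m k c)%nat ->
  cls m (nth i s (Test 0)) = c.
Proof.
  intros Hb Hd [Hlen Hrun] Hi Hmap Hc Hlow Hzero Hj.
  destruct (feasible_facts (m + k) s) as [ND V].
  { intros kk Hk. apply Hrun; auto. }
  set (q := firstn i s).
  assert (NDq : NoDup q).
  { apply (NoDup_app_remove_r _ (skipn i s)). unfold q. rewrite firstn_skipn. auto. }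
  assert (Vq : forall x, In x q -> (idx x < m + k)%nat).
  { intros x Hx. apply V. unfold q in Hx. rewrite <- (firstn_skipn i s). apply in_or_app; auto. }
  assert (Hex : forall c', (c' < c)%nat -> incl (mem m k c') q).
  { intros c' Hc'. apply EXH; auto; try lia. fold q in Hmap. rewrite Hmap, count_occ_app.
    specialize (Hlow c' Hc'). lia. }
  destruct (WIT m k c q Hc) as [x [Hx Hxq]].
  { fold q in Hmap. rewrite Hmap, count_occ_app, count_occ_repeat_eq by auto. lia. }
  assert (Hxa : avail (m + k) q x).
  { pose proof Hx as Hx'. apply mem_iff in Hx' as [Hcx Hix]; auto.
    destruct x as [jx|jx]; simpl in *; [tauto|]. split; [auto|split; auto].
    destruct (jx <? m)%nat eqn:E.
    - apply (Hex 0%nat); [lia|]. apply mem_iff; try lia. simpl. rewrite E. auto.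
    - apply (Hex 1%nat); [lia|]. apply mem_iff; try lia. simpl. rewrite E. auto. }
  destruct (Hrun i Hi) as [Ho Hmin].
  fold q in Ho, Hmin.
  specialize (Hmin x Hxa). rewrite !prio_cls in Hmin.
  apply mem_iff in Hx as [Hcx _]; auto. rewrite Hcx in Hmin.
  set (o := nth i s (Test 0)) in *.
  apply avail_props in Ho as [Hoq Hoi].
  destruct (Nat.lt_trichotomy (cls m o) c) as [Hlt|[Heq|Hgt]]; auto.
  - exfalso. apply Hoq. apply (Hex (cls m o) Hlt). apply mem_iff; auto. apply cls_le3.
  - exfalso. pose proof (Pc_strict beta b d c (cls m o) Hb Hd Hgt (cls_le3 m o)). lra.
Qed.

Lemma phase_lemma beta b d m k s B c :
  0 < beta * b < 1 -> 1 < d ->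
  beta_sort_run beta (m + k) (tI m b) (pI m d) s ->
  (c <= 3)%nat ->
  (forall c', (c' < c)%nat -> (count_occ Nat.eq_dec B c' >= sz m k c')%nat) ->
  count_occ Nat.eq_dec B c = 0%nat ->
  (length B + sz m k c <= length s)%nat ->
  firstn (length B) (map (cls m) s) = B ->
  forall j, (j <= sz m k c)%nat ->
  firstn (length B + j) (map (cls m) s) = B ++ repeat c j.
Proof.
  intros Hb Hd Hrun Hc Hlow Hzero Hlen H0.
  induction j as [|j IH]; intros Hj.
  - rewrite Nat.add_0_r, app_nil_r. auto.
  - assert (Hi : (length B + j < length s)%nat) by lia.
    rewrite Nat.add_succ_r, (firstn_snoc _ (cls m (Test 0))) by (rewrite length_map; lia).
    rewrite IH by lia. rewrite map_nth.
    rewrite (step_lemma beta b d m k s (length B + j) B c j); auto; try lia.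
    + replace (S j) with (j + 1)%nat by lia. rewrite repeat_app, app_assoc. reflexivity.
    + rewrite <- firstn_map. apply IH. lia.
Qed.
Ltac cnt_simpl :=
  repeat rewrite count_occ_app;
  repeat first [ (rewrite count_occ_repeat_eq by reflexivity) | (rewrite count_occ_repeat_neq by discriminate) ];
  simpl.

Lemma run_pattern beta b d m k s :
  0 < beta * b < 1 -> 1 < d ->
  beta_sort_run beta (m + k) (tI m b) (pI m d) s ->
  map (cls m) s = repeat 0%nat m ++ repeat 1%nat k ++ repeat 2%nat k ++ repeat 3%nat m.
Proof.
  intros Hb Hd Hrun. pose proof Hrun as [Hlen _].
  assert (P0 : firstn (length (@nil nat) + m) (map (cls m) s) = [] ++ repeat 0%nat m).
  { apply (phase_lemma beta b d m k s [] 0); auto; simpl; intros; lia. }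
  simpl in P0.
  assert (P1 : firstn (length (repeat 0%nat m) + k) (map (cls m) s) = repeat 0%nat m ++ repeat 1%nat k).
  { apply (phase_lemma beta b d m k s _ 1); auto; rewrite ?repeat_length; simpl; try lia; try assumption.
    - intros c' Hc'; destruct c' as [|]; [|lia]; cnt_simpl; lia.
    - cnt_simpl; lia. }
  rewrite repeat_length in P1.
  assert (P2 : firstn (length (repeat 0%nat m ++ repeat 1%nat k) + k) (map (cls m) s)
     = (repeat 0%nat m ++ repeat 1%nat k) ++ repeat 2%nat k).
  { apply (phase_lemma beta b d m k s _ 2); auto; rewrite ?length_app, ?repeat_length; simpl; try lia; try assumption.
    - intros c' Hc'; destruct c' as [|[|]]; try lia; cnt_simpl; lia.
    - cnt_simpl; lia. }
  rewrite length_app, !repeat_length in P2.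
  assert (P3 : firstn (length ((repeat 0%nat m ++ repeat 1%nat k) ++ repeat 2%nat k) + m) (map (cls m) s)
     = ((repeat 0%nat m ++ repeat 1%nat k) ++ repeat 2%nat k) ++ repeat 3%nat m).
  { apply (phase_lemma beta b d m k s _ 3); auto; rewrite ?length_app, ?repeat_length; simpl; try lia; try assumption.
    - intros c' Hc'; destruct c' as [|[|[|]]]; try lia; cnt_simpl; lia.
    - cnt_simpl; lia. }
  rewrite !length_app, !repeat_length in P3.
  rewrite <- !app_assoc in P3. rewrite <- P3.
  rewrite firstn_all2; auto. rewrite length_map. lia.
Qed.
Fixpoint costc (b d : R) (e : R) (l : list nat) : R :=
  match l with
  | [] => 0
  | c :: l' => (if isP c then e + wc b d c else 0) + costc b d (e + wc b d c) l'
  end.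

Lemma cost_cls m b d : forall s e,
  cost_aux (tI m b) (pI m d) e s = costc b d e (map (cls m) s).
Proof.
  induction s as [|o s IH]; intros e; simpl; auto.
  rewrite IH, dur_cls. f_equal.
  destruct o; simpl; destruct (_ <? _)%nat; reflexivity.
Qed.

Lemma costc_repeat b d c : forall L e l,
  costc b d e (repeat c L ++ l) =
  (if isP c then INR L * e + wc b d c * INR L * (INR L + 1) / 2 else 0)
  + costc b d (e + INR L * wc b d c) l.
Proof.
  induction L as [|L IH]; intros e l; simpl repeat.
  - simpl. replace (e + 0 * wc b d c) with e by ring. destruct (isP c); field.
  - rewrite S_INR, <- app_comm_cons. cbn [costc]. rewrite IH.
    replace (e + wc b d c + INR L * wc b d c) with (e + (INR L + 1) * wc b d c) by ring.
    destruct (isP c); field.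
Qed.

Fixpoint pairs (L : nat) : list nat :=
  match L with 0%nat => [] | S L => 1%nat :: 2%nat :: pairs L end.

Lemma costc_pairs b d : forall L e l,
  costc b d e (pairs L ++ l) =
  INR L * e + (b + 1) * INR L * (INR L + 1) / 2 + costc b d (e + INR L * (b + 1)) l.
Proof.
  induction L as [|L IH]; intros e l.
  - simpl. replace (e + 0 * (b + 1)) with e by ring. field.
  - rewrite S_INR. cbn [pairs]. rewrite <- !app_comm_cons. cbn [costc wc isP]. rewrite IH.
    replace (e + b + 1 + INR L * (b + 1)) with (e + (INR L + 1) * (b + 1)) by ring.
    field.
Qed.

Definition bpairs (a L : nat) : list op := flat_map (fun j => [Test j; Proc j]) (seq a L).

Lemma bpairs_cls m : forall L a, (m <= a)%nat -> map (cls m) (bpairs a L) = pairs L.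
Proof.
  induction L as [|L IH]; intros a Ha; simpl; auto.
  unfold bpairs in *. simpl. destruct (a <? m)%nat eqn:E.
  - apply Nat.ltb_lt in E; lia.
  - rewrite IH by lia. reflexivity.
Qed.

Lemma bpairs_length : forall L a, length (bpairs a L) = (2 * L)%nat.
Proof. induction L as [|L IH]; intros a; simpl; auto. unfold bpairs in *; simpl. rewrite IH. lia. Qed.

Definition sched0 (m k : nat) : list op :=
  map Test (seq 0 m) ++ map Proc (seq 0 m) ++ bpairs m k.

Lemma map_cls_const m c (f : nat -> op) a L :
  (forall j, (a <= j < a + L)%nat -> cls m (f j) = c) ->
  map (cls m) (map f (seq a L)) = repeat c L.
Proof.
  intros H. rewrite map_map. rewrite (map_ext_in _ (fun _ => c)).
  - rewrite map_const, length_seq. auto.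
  - intros j Hj. apply in_seq in Hj. apply H; auto.
Qed.

Lemma sched0_cost m k b d :
  sumC (tI m b) (pI m d) (sched0 m k) =
  d * INR m * (INR m + 1) / 2 + INR k * (INR m * d) + (b + 1) * INR k * (INR k + 1) / 2.
Proof.
  unfold sumC, sched0. rewrite cost_cls, !map_app.
  rewrite (map_cls_const m 0 Test), (map_cls_const m 3 Proc), bpairs_cls; auto;
  try (intros j Hj; simpl; destruct (j <? m)%nat eqn:E; auto; apply Nat.ltb_ge in E; lia).
  rewrite costc_repeat, costc_repeat, <- (app_nil_r (pairs k)), costc_pairs.
  simpl. field.
Qed.
Fixpoint okseq (n : nat) (dn : list op) (s : list op) : Prop :=
  match s with
  | [] => True
  | o :: s' => avail n dn o /\ okseq n (dn ++ [o]) s'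
  end.

Lemma okseq_avail n : forall s dn, okseq n dn s ->
  forall k, (k < length s)%nat -> avail n (dn ++ firstn k s) (nth k s (Test 0)).
Proof.
  induction s as [|o s IH]; intros dn H kk Hk; simpl in *; [lia|].
  destruct H as [H1 H2]. destruct kk as [|kk].
  - simpl. rewrite app_nil_r. auto.
  - simpl. replace (dn ++ o :: firstn kk s) with ((dn ++ [o]) ++ firstn kk s) by (rewrite <- app_assoc; reflexivity). apply IH; auto; lia.
Qed.
Lemma okseq_app n : forall l1 l2 dn, okseq n dn l1 -> okseq n (dn ++ l1) l2 -> okseq n dn (l1 ++ l2).
Proof.
  induction l1 as [|o l1 IH]; intros l2 dn H1 H2; simpl in *.
  - rewrite app_nil_r in H2. auto.
  - destruct H1 as [Ha Hb]. split; auto. apply IH; auto. rewrite <- app_assoc. auto.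
Qed.

Lemma ok_tests n : forall L a dn,
  (forall j, (a <= j < a + L)%nat -> (j < n)%nat /\ ~ In (Test j) dn) ->
  okseq n dn (map Test (seq a L)).
Proof.
  induction L as [|L IH]; intros a dn H; simpl; auto. split.
  - apply H; lia.
  - apply IH. intros j Hj. destruct (H j) as [H1 H2]; [lia|]. split; auto.
    rewrite in_app_iff. intros [Hc|[Hc|Hc]]; auto. injection Hc; lia.
Qed.

Lemma ok_procs n : forall L a dn,
  (forall j, (a <= j < a + L)%nat -> (j < n)%nat /\ In (Test j) dn /\ ~ In (Proc j) dn) ->
  okseq n dn (map Proc (seq a L)).
Proof.
  induction L as [|L IH]; intros a dn H; simpl; auto. split.
  - apply H; lia.
  - apply IH. intros j Hj. destruct (H j) as [H1 [H2 H3]]; [lia|]. split; [auto|split].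
    + apply in_or_app; auto.
    + rewrite in_app_iff. intros [Hc|[Hc|Hc]]; auto. injection Hc; lia.
Qed.

Lemma ok_pairs n : forall L a dn,
  (forall j, (a <= j < a + L)%nat -> (j < n)%nat /\ ~ In (Test j) dn /\ ~ In (Proc j) dn) ->
  okseq n dn (bpairs a L).
Proof.
  induction L as [|L IH]; intros a dn H; unfold bpairs; simpl; auto.
  destruct (H a) as [H1 [H2 H3]]; [lia|].
  split; [split; auto|split].
  - split; [auto|split].
    + apply in_or_app; simpl; auto.
    + rewrite in_app_iff. intros [Hc|[Hc|Hc]]; auto; discriminate.
  - apply IH. intros j Hj. destruct (H j) as [G1 [G2 G3]]; [lia|]. split; [auto|split];
    rewrite !in_app_iff; intros [[Hc|[Hc|Hc]]|[Hc|Hc]]; auto; try discriminate; injection Hc; lia.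
Qed.

Lemma sched0_feasible m k : feasible_order (m + k) (sched0 m k).
Proof.
  split.
  - unfold sched0. rewrite !length_app, !length_map, length_seq, bpairs_length. lia.
  - intros kk Hk. rewrite <- (app_nil_l (firstn kk _)). apply okseq_avail; auto.
    unfold sched0. apply okseq_app; [|apply okseq_app].
    + apply ok_tests. intros j Hj. split; [lia|auto].
    + apply ok_procs. intros j Hj. simpl. split; [lia|split].
      * apply in_map, in_seq; lia.
      * rewrite in_map_iff. intros [x [Hx _]]; discriminate.
    + apply ok_pairs. intros j Hj. simpl. split; [lia|split];
      rewrite in_app_iff, !in_map_iff; intros [[x [Hx Hx2]]|[x [Hx Hx2]]]; try discriminate;
      injection Hx; intros; subst; apply in_seq in Hx2; lia.
Qed.
Definition alphabet (n : nat) : list op := map Test (seq 0 n) ++ map Proc (seq 0 n).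

Fixpoint all_lists (A : list op) (L : nat) : list (list op) :=
  match L with
  | 0%nat => [[]]
  | S L => flat_map (fun o => map (cons o) (all_lists A L)) A
  end.

Lemma in_all_lists A : forall L s, length s = L -> (forall x, In x s -> In x A) -> In s (all_lists A L).
Proof.
  induction L as [|L IH]; intros s Hl Hs; destruct s as [|o s]; simpl in *; try lia; auto.
  apply in_flat_map. exists o. split; auto. apply in_map. apply IH; auto.
Qed.

Lemma min_exists (F : list op -> Prop) (f : list op -> R) : forall Ls,
  (exists s, In s Ls /\ F s) ->
  exists v, (exists s, In s Ls /\ F s /\ f s = v) /\ (forall s, In s Ls -> F s -> v <= f s).
Proof.
  induction Ls as [|s0 Ls IH]; intros [s [Hs HF]]; [destruct Hs|].
  destruct (classic (exists s, In s Ls /\ F s)) as [Hex|Hno].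
  - destruct (IH Hex) as [v [[s1 [H1 [H2 H3]]] Hmin]].
    destruct (classic (F s0)) as [HF0|HF0].
    + destruct (Rle_dec (f s0) v) as [Hle|Hgt].
      * exists (f s0). split; [exists s0; simpl; auto|].
        intros s' [E|Hin] HF'; [subst; lra|]. specialize (Hmin s' Hin HF'). lra.
      * exists v. split; [exists s1; simpl; auto|].
        intros s' [E|Hin] HF'; [subst; lra|]. auto.
    + exists v. split; [exists s1; simpl; auto|].
      intros s' [E|Hin] HF'; [subst; contradiction|]. auto.
  - assert (HF0 : F s0).
    { destruct Hs as [E|Hin]; [subst; auto|]. exfalso; apply Hno; eauto. }
    exists (f s0). split; [exists s0; simpl; auto|].
    intros s' [E|Hin] HF'; [subst; lra|]. exfalso; apply Hno; eauto.
Qed.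

Lemma feasible_in_all n s : feasible_order n s -> In s (all_lists (alphabet n) (2 * n)).
Proof.
  intros [Hl Hav]. apply in_all_lists; auto.
  destruct (feasible_facts n s Hav) as [_ V]. intros x Hx. specialize (V x Hx).
  unfold alphabet. apply in_or_app. destruct x as [j|j]; simpl in V;
  [left|right]; apply in_map, in_seq; lia.
Qed.

Lemma OPT_exists n t p s0 : feasible_order n s0 ->
  exists v, is_OPT n t p v.
Proof.
  intros H0.
  destruct (min_exists (feasible_order n) (sumC t p) (all_lists (alphabet n) (2 * n)))
    as [v [[s [_ [Hs Hv]]] Hmin]].
  { exists s0. split; auto. apply feasible_in_all; auto. }
  exists v. split; [exists s; auto|]. intros s' Hs'. apply Hmin; auto. apply feasible_in_all; auto.
Qed.

Lemma cost_nonneg t p : (forall j, 0 <= t j) -> (forall j, 0 <= p j) ->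
  forall s e, 0 <= e -> 0 <= cost_aux t p e s.
Proof.
  intros Ht Hp. induction s as [|o s IH]; intros e He; simpl; [lra|].
  assert (0 <= dur t p o) by (destruct o; simpl; auto).
  assert (0 <= e + dur t p o) by lra.
  specialize (IH _ H0). destruct o; lra.
Qed.

Lemma cost_ge_proc t p j : (forall j, 0 <= t j) -> (forall j, 0 <= p j) ->
  forall s e, 0 <= e -> In (Proc j) s -> p j <= cost_aux t p e s.
Proof.
  intros Ht Hp. induction s as [|o s IH]; intros e He Hin; simpl in *; [contradiction|].
  assert (0 <= dur t p o) by (destruct o; simpl; auto).
  assert (0 <= e + dur t p o) by lra.
  pose proof (cost_nonneg t p Ht Hp s _ H0).
  destruct Hin as [E|Hin].
  - subst. simpl in *. lra.
  - specialize (IH _ H0 Hin). destruct o; lra.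
Qed.

Lemma feasible_has_proc n s : (1 <= n)%nat -> feasible_order n s -> exists j, In (Proc j) s.
Proof.
  intros Hn [Hl Hav]. destruct (feasible_facts n s Hav) as [ND V].
  apply NNPP. intros Hno.
  assert (Hi : incl s (map Test (seq 0 n))).
  { intros x Hx. destruct x as [j|j].
    - apply in_map, in_seq. specialize (V _ Hx). simpl in V. lia.
    - exfalso. apply Hno. eauto. }
  apply NoDup_incl_length in Hi; auto. rewrite length_map, length_seq in Hi. lia.
Qed.
Lemma key_ineq rho r K x e delta :
  rho * rho - rho = r -> 1 <= r -> 1 < rho -> 2 <= K -> 0 < delta ->
  e * K = 1 -> 0 < e ->
  K * delta > rho * (rho * rho + rho + r) + 2 * rho + 1 ->
  0 <= x -> x <= (rho - 1) * K -> (rho - 1) * K < x + 1 ->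
  0 <= rho - delta ->
  (rho - delta) * ((1 + e) * x * (x + 1) / 2 + K * (x * (1 + e)) + ((r - e) + 1) * K * (K + 1) / 2)
  <= K * (K * (r - e)) + K * (K + 1) / 2 + x * (K * (r - e) + K) + (1 + e) * x * (x + 1) / 2.
Proof.
  intros Hr Hr1 Hrho HK Hd HeK He HKd Hx0 Hx1 Hx2 Hrd.
  set (Mc := rho * rho + rho + r).
  set (P := K * K * r + K * K / 2 + x * K * (r + 1) + x * x / 2).
  set (Q := x * x / 2 + K * x + (r + 1) * K * K / 2).
  assert (E1 : K * K * e = K) by (rewrite Rmult_assoc, (Rmult_comm K e), HeK; ring).
  assert (E2 : x * K * e = x) by (rewrite Rmult_assoc, (Rmult_comm K e), HeK; ring).
  assert (Hxxe : 0 <= e * (x * x)) by (apply Rmult_le_pos; [lra|apply Rmult_le_pos; lra]).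
  assert (Hxe : 0 <= e * x) by (apply Rmult_le_pos; lra).
  assert (HA : P - K / 2 - x <= K * (K * (r - e)) + K * (K + 1) / 2 + x * (K * (r - e) + K) + (1 + e) * x * (x + 1) / 2).
  { unfold P. lra. }
  assert (Hx1' : x * x <= (rho - 1) * K * ((rho - 1) * K)).
  { apply Rmult_le_compat; lra. }
  assert (Hex2 : e * (x * x) <= (rho - 1) * (rho - 1) * K).
  { apply Rmult_le_compat_l with (r := e) in Hx1'; [|lra].
    replace (e * ((rho - 1) * K * ((rho - 1) * K))) with ((rho - 1) * (rho - 1) * K * (e * K)) in Hx1' by ring.
    rewrite HeK in Hx1'. lra. }
  assert (Hex1 : e * x <= rho - 1).
  { apply Rmult_le_compat_l with (r := e) in Hx1; [|lra].
    replace (e * ((rho - 1) * K)) with ((rho - 1) * (e * K)) in Hx1 by ring. rewrite HeK in Hx1. lra. }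
  assert (Hr2 : (rho - 1) * (rho - 1) * K <= K * (rho * rho)).
  { clear -Hrho HK. nra. }
  assert (Hr3 : rho - 1 <= K * rho) by (clear -Hrho HK; nra).
  assert (Hr4 : x <= K * rho) by (clear -Hrho HK Hx1; nra).
  assert (HO : (1 + e) * x * (x + 1) / 2 + K * (x * (1 + e)) + ((r - e) + 1) * K * (K + 1) / 2
                 <= Q + K * Mc).
  { unfold Q, Mc. assert (K * x * e = x) by lra.
    assert (K * (rho * rho + rho + r) = K * (rho * rho) + K * rho + K * r) by ring.
    assert (0 <= K * r) by (clear -HK Hr1; nra). assert (0 <= K * (rho * rho)) by (clear -HK Hrho; nra).
    assert (K * 1 <= K * rho) by (clear -HK Hrho; nra).
    lra. }
  assert (HPQ : P - rho * Q = - (rho - 1) / 2 * (((rho - 1) * K - x) * ((rho - 1) * K - x))).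
  { unfold P, Q. rewrite <- Hr. field. }
  assert (Hy : ((rho - 1) * K - x) * ((rho - 1) * K - x) <= 1).
  { assert (0 <= (rho - 1) * K - x < 1) by lra. clear -H. nra. }
  assert (HQ : K * K <= Q).
  { unfold Q. assert (0 <= x * x) by (clear -Hx0; nra). assert (0 <= K * x) by (clear -Hx0 HK; nra).
    assert (2 * (K * K) <= (r + 1) * K * K) by (clear -HK Hr1; nra). lra. }
  assert (HMc : 0 <= Mc) by (unfold Mc; clear -Hrho Hr1; nra).
  assert (Hdel : delta * (K * K) >= K * (rho * Mc + 2 * rho + 1)).
  { fold Mc in HKd. replace (delta * (K * K)) with (K * (K * delta)) by ring.
    apply Rle_ge, Rmult_le_compat_l; lra. }
  assert (H2 : (rho - delta) * ((1 + e) * x * (x + 1) / 2 + K * (x * (1 + e)) + ((r - e) + 1) * K * (K + 1) / 2)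
               <= (rho - delta) * (Q + K * Mc)) by (apply Rmult_le_compat_l; lra).
  assert (H3 : - (rho - 1) / 2 * (((rho - 1) * K - x) * ((rho - 1) * K - x)) >= - (rho - 1) / 2).
  { assert (0 <= (rho - 1) / 2) by lra. clear -H Hy. nra. }
  assert (H4 : delta * Q >= delta * (K * K)) by (apply Rle_ge, Rmult_le_compat_l; lra).
  assert (H5 : (rho - delta) * (Q + K * Mc) = rho * Q - delta * Q + rho * (K * Mc) - delta * (K * Mc)) by ring.
  assert (H6 : 0 <= delta * (K * Mc)) by (apply Rmult_le_pos; [lra|apply Rmult_le_pos; lra]).
  assert (H7 : K * (rho * Mc + 2 * rho + 1) = rho * (K * Mc) + K * (2 * rho + 1)) by ring.
  assert (H8 : (rho - 1) * K <= K * rho) by (clear -HK Hrho; nra).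
  lra.
Qed.

Lemma floor_nat y : 0 <= y -> exists m : nat, INR m <= y < INR m + 1.
Proof.
  intros Hy. destruct (archimed y) as [H1 H2].
  set (z := (up y - 1)%Z).
  assert (Hz : IZR z = IZR (up y) - 1) by (unfold z; rewrite minus_IZR; reflexivity).
  assert (Hz0 : (0 <= z)%Z).
  { assert (IZR (-1) < IZR z) by (rewrite Hz; simpl; lra). apply lt_IZR in H. lia. }
  exists (Z.to_nat z). rewrite INR_IZR_INZ, Z2Nat.id by auto. lra.
Qed.

Lemma ALG_formula beta b d m k s :
  0 < beta * b < 1 -> 1 < d ->
  beta_sort_run beta (m + k) (tI m b) (pI m d) s ->
  sumC (tI m b) (pI m d) s =
  INR k * (INR k * b) + INR k * (INR k + 1) / 2 + INR m * (INR k * b + INR k) + d * INR m * (INR m + 1) / 2.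
Proof.
  intros Hb Hd Hrun. unfold sumC. rewrite cost_cls, (run_pattern beta b d m k s Hb Hd Hrun).
  rewrite <- (app_nil_r (repeat 3%nat m)).
  rewrite !costc_repeat. simpl. field.
Qed.

Lemma main_beta beta delta : 0 < beta <= 1 -> 0 < delta ->
   exists (n : nat) (t p : nat -> R),
     (forall j, (j < n)%nat -> 0 <= t j /\ 0 <= p j) /\
     exists OPT : R, is_OPT n t p OPT /\ 0 < OPT /\
       forall s, beta_sort_run beta n t p s ->
         sumC t p s / OPT >= / 2 * (sqrt ((beta + 4) / beta) + 1) - delta.
Proof.
  intros [Hb0 Hb1] Hd.
  set (S := sqrt ((beta + 4) / beta)).
  assert (HS0 : 0 <= S) by apply sqrt_pos.
  set (r := / beta).
  assert (Hrb : r * beta = 1) by (unfold r; field; lra).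
  assert (Hr1 : 1 <= r) by (clear -Hrb Hb0 Hb1; nra).
  assert (HSS : S * S = 1 + 4 * r).
  { unfold S. rewrite sqrt_sqrt. unfold r; field; lra.
    apply Rlt_le, Rdiv_lt_0_compat; lra. }
  set (rho := / 2 * (S + 1)).
  assert (Hrho : rho * rho - rho = r).
  { unfold rho. replace (/ 2 * (S + 1) * (/ 2 * (S + 1)) - / 2 * (S + 1)) with ((S * S - 1) / 4) by field.
    rewrite HSS. field. }
  assert (HS2 : 2 < S) by (clear -HSS HS0 Hr1; nra).
  assert (Hrho1 : 1 < rho) by (unfold rho; lra).
  set (Bd := (rho * (rho * rho + rho + r) + 2 * rho + 1) / delta).
  assert (HBd : 0 <= Bd).
  { unfold Bd. apply Rlt_le, Rdiv_lt_0_compat; auto. clear -Hrho1 Hr1; nra. }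
  destruct (floor_nat Bd HBd) as [N [HN1 HN2]].
  set (K := (N + 2)%nat).
  assert (HKr : INR K = INR N + 2) by (unfold K; rewrite plus_INR; simpl; ring).
  set (Kr := INR K).
  assert (HK2 : 2 <= Kr) by (unfold Kr; rewrite HKr; pose proof (pos_INR N); lra).
  assert (HKd : Kr * delta > rho * (rho * rho + rho + r) + 2 * rho + 1).
  { assert (Bd < Kr) by (unfold Kr; lra). unfold Bd in H.
    apply Rmult_lt_compat_r with (r := delta) in H; auto.
    unfold Rdiv in H. rewrite Rmult_assoc, Rinv_l, Rmult_1_r in H; lra. }
  assert (Hy0 : 0 <= (rho - 1) * Kr) by (clear -Hrho1 HK2; nra).
  destruct (floor_nat _ Hy0) as [m [Hm1 Hm2]].
  set (e := / Kr).
  assert (HeK : e * Kr = 1) by (unfold e; field; lra).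
  assert (He0 : 0 < e) by (unfold e; apply Rinv_0_lt_compat; lra).
  assert (He1 : e <= / 2) by (unfold e; apply Rinv_le_contravar; lra).
  set (b := r - e). set (d := 1 + e).
  assert (Hbb : 0 < beta * b < 1).
  { unfold b. assert (beta * (r - e) = 1 - beta * e) by (rewrite Rmult_minus_distr_l, (Rmult_comm beta r), Hrb; ring).
    rewrite H. assert (0 < beta * e) by (apply Rmult_lt_0_compat; lra).
    assert (beta * e <= e) by (clear -Hb1 He0 Hb0; nra). lra. }
  assert (Hdd : 1 < d) by (unfold d; lra).
  exists (m + K)%nat, (tI m b), (pI m d). split.
  { intros j _. unfold tI, pI. destruct (j <? m)%nat; split; unfold b, d; lra. }
  destruct (OPT_exists (m + K) (tI m b) (pI m d) _ (sched0_feasible m K)) as [v Hv].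
  exists v. split; [auto|].
  assert (Hv0 : 0 < v).
  { destruct Hv as [[s [Hs Hsv]] _]. destruct (feasible_has_proc (m + K) s) as [j Hj]; auto.
    - unfold K. lia.
    - rewrite <- Hsv. unfold sumC.
      assert (0 < pI m d j) by (unfold pI; destruct (j <? m)%nat; lra).
      assert (pI m d j <= cost_aux (tI m b) (pI m d) 0 s); [|lra].
      apply cost_ge_proc; auto; try lra; intros j'; unfold tI, pI; destruct (j' <? m)%nat; unfold b, d; lra. }
  assert (Hvu : v <= sumC (tI m b) (pI m d) (sched0 m K)).
  { destruct Hv as [_ Hmin]. apply Hmin, sched0_feasible. }
  rewrite sched0_cost in Hvu. fold Kr in Hvu.
  split; [auto|]. intros s Hrun.
  rewrite (ALG_formula beta b d m K s Hbb Hdd Hrun). fold Kr. fold rho.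
  set (x := INR m) in *.
  set (ALG := Kr * (Kr * b) + Kr * (Kr + 1) / 2 + x * (Kr * b + Kr) + d * x * (x + 1) / 2).
  assert (HALG0 : 0 <= ALG).
  { unfold ALG. assert (0 <= x) by apply pos_INR. assert (0 <= b) by (unfold b; lra).
    assert (0 <= Kr * b) by (clear -HK2 H0; nra). assert (0 <= x * (Kr * b + Kr)) by (clear -HK2 H H1; nra).
    assert (0 <= d * x * (x + 1)) by (unfold d; clear -H He0; nra).
    assert (0 <= Kr * (Kr * b)) by (clear -HK2 H1; nra). assert (0 <= Kr * (Kr + 1)) by (clear -HK2; nra). lra. }
  destruct (Rle_or_lt 0 (rho - delta)) as [Hpos|Hneg].
  - assert (Hkey := key_ineq rho r Kr x e delta Hrho Hr1 Hrho1 HK2 Hd HeK He0 HKd (pos_INR m) Hm1 Hm2 Hpos).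
    assert (HAe : ALG = Kr * (Kr * (r - e)) + Kr * (Kr + 1) / 2 + x * (Kr * (r - e) + Kr) + (1 + e) * x * (x + 1) / 2)
      by (unfold ALG, b, d; ring).
    assert (HOe : d * x * (x + 1) / 2 + Kr * (x * d) + (b + 1) * Kr * (Kr + 1) / 2 =
       (1 + e) * x * (x + 1) / 2 + Kr * (x * (1 + e)) + ((r - e) + 1) * Kr * (Kr + 1) / 2)
      by (unfold b, d; ring).
    rewrite <- HAe, <- HOe in Hkey.
    apply Rle_ge. apply Rmult_le_reg_r with v; auto.
    unfold Rdiv. rewrite Rmult_assoc, Rinv_l, Rmult_1_r by lra.
    assert ((rho - delta) * v <= (rho - delta) * (d * x * (x + 1) / 2 + Kr * (x * d) + (b + 1) * Kr * (Kr + 1) / 2))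
      by (apply Rmult_le_compat_l; lra).
    lra.
  - assert (0 <= ALG / v) by (apply Rle_mult_inv_pos; lra). lra.
Qed.

Theorem mainTheorem12 :
  (forall beta : R, 0 < beta <= 1 ->
   forall delta : R, 0 < delta ->
   exists (n : nat) (t p : nat -> R),
     (forall j, (j < n)%nat -> 0 <= t j /\ 0 <= p j) /\
     exists OPT : R, is_OPT n t p OPT /\ 0 < OPT /\
       forall s, beta_sort_run beta n t p s ->
         sumC t p s / OPT >= / 2 * (sqrt ((beta + 4) / beta) + 1) - delta)
  /\
  (forall delta : R, 0 < delta ->
   exists (n : nat) (t p : nat -> R),
     (forall j, (j < n)%nat -> 0 <= t j /\ 0 <= p j) /\
     exists OPT : R, is_OPT n t p OPT /\ 0 < OPT /\
       forall s, beta_sort_run 1 n t p s ->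
         sumC t p s / OPT >= (1 + sqrt 5) / 2 - delta).
Proof.
  split.
  - intros beta Hb delta Hd. apply main_beta; auto.
  - intros delta Hd. destruct (main_beta 1 delta ltac:(lra) Hd) as [n [t [p [H1 [v [H2 [H3 H4]]]]]]].
    exists n, t, p. split; auto. exists v. split; auto. split; auto.
    intros s Hs. specialize (H4 s Hs).
    replace ((1 + 4) / 1) with 5 in H4 by field.
    replace ((1 + sqrt 5) / 2) with (/ 2 * (sqrt 5 + 1)) by field. exact H4.
Qed.
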